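(* In the periodic lock scheduling problem, there exists an optimal schedule $\sigma$ that is periodic with period of length at most $8\Lambda$, where $\Lambda=\operatorname{lcm}(\lambda_1,\dots,\lambda_k)$.
   Context: Periodic lock scheduling problem. Time is discrete, periods $t=1,2,\dots$. There are $k$ vessel streams; stream $i$ has a direction $\delta_i\in\{D,U\}$, an integer periodicity $\lambda_i\ge1$ and an integer offset $1\le\mu_i\le\lambda_i$; $a_i(t)=1$ if $t\equiv\mu_i\pmod{\lambda_i}$ and $0$ otherwise, $a_\delta(t)=\sum_{i:\delta_i=\delta}a_i(t)$. A schedule is a sequence $\sigma=(\sigma(t))_{t\ge1}$ with $\sigma(t)\in\{D,U,W\}$ ($D$: process downstream waiting vessels and switch alignment from downstream to upstream; $U$ symmetrically; $W$: wait at current alignment); the initial orientation is arbitrary; it is feasible if the non-$W$ actions alternate between $D$ and $U$. A sequence is periodic with period $P$ if $\sigma(t)=\sigma(t+P)$ for all $t$. Queue lengths: $n_D(0)=n_U(0)=0$ and for $t\ge1$, $n_\delta(t)=0$ if $\sigma(t)=\delta$ and $n_\delta(t)=n_\delta(t-1)+a_\delta(t)$ otherwise. $C_\sigma(t)=n_D(t)+n_U(t)$ and $C_{\mathrm{avg},\sigma}=\lim_{T\to\infty}\frac1T\sum_{t=1}^TC_\sigma(t)$. A schedule is optimal if it is feasible and minimizes $C_{\mathrm{avg},\sigma}$ over all feasible schedules. *)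

(* Defs.v *)
From Stdlib Require Import Reals Arith List Lia.
From Coquelicot Require Import Coquelicot.
Open Scope R_scope.

Inductive dir : Type := DirD | DirU.

Inductive action : Type := ActD | ActU | ActW.

Definition act_of_dir (d : dir) : action :=
  match d with DirD => ActD | DirU => ActU end.

Definition stream : Type := (dir * nat * nat)%type.
Definition s_dir (s : stream) : dir := fst (fst s).
Definition s_lam (s : stream) : nat := snd (fst s).
Definition s_mu  (s : stream) : nat := snd s.

Definition stream_wf (s : stream) : Prop :=
  (1 <= s_lam s)%nat /\ (1 <= s_mu s)%nat /\ (s_mu s <= s_lam s)%nat.

Definition arrives (s : stream) (t : nat) : bool :=
  Nat.eqb (t mod s_lam s) (s_mu s mod s_lam s).

Definition dir_eqb (d1 d2 : dir) : bool :=
  match d1, d2 with DirD, DirD | DirU, DirU => true | _, _ => false end.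

Definition arrivals (ss : list stream) (d : dir) (t : nat) : nat :=
  length (filter (fun s => andb (dir_eqb (s_dir s) d) (arrives s t)) ss).

Definition big_lambda (ss : list stream) : nat :=
  fold_right Nat.lcm 1%nat (map s_lam ss).

(* Schedules: sigma : nat -> action, only sigma t for t >= 1 is relevant. *)
Definition schedule : Type := nat -> action.

(* Feasible: the non-W actions (at periods t >= 1) alternate between D and U;
   the initial orientation is arbitrary. *)
Definition feasible (sigma : schedule) : Prop :=
  forall t1 t2 : nat, (1 <= t1)%nat -> (t1 < t2)%nat ->
    sigma t1 <> ActW -> sigma t2 <> ActW ->
    (forall t, (t1 < t)%nat -> (t < t2)%nat -> sigma t = ActW) ->
    sigma t1 <> sigma t2.

Definition periodic (sigma : schedule) (P : nat) : Prop :=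
  forall t : nat, (1 <= t)%nat -> sigma t = sigma (t + P)%nat.

Definition action_eqb (a b : action) : bool :=
  match a, b with
  | ActD, ActD | ActU, ActU | ActW, ActW => true
  | _, _ => false
  end.

Fixpoint queue (ss : list stream) (sigma : schedule) (d : dir) (t : nat) : nat :=
  match t with
  | O => O
  | S t' => if action_eqb (sigma (S t')) (act_of_dir d) then O
            else (queue ss sigma d t' + arrivals ss d (S t'))%nat
  end.

Definition cost (ss : list stream) (sigma : schedule) (t : nat) : nat :=
  (queue ss sigma DirD t + queue ss sigma DirU t)%nat.

Fixpoint total_cost (ss : list stream) (sigma : schedule) (T : nat) : nat :=
  match T with
  | O => O
  | S T' => (total_cost ss sigma T' + cost ss sigma (S T'))%nat
  end.

Definition avg_cost (ss : list stream) (sigma : schedule) (T : nat) : R :=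
  INR (total_cost ss sigma T) / INR T.

(* Optimal: feasible, C_avg (a limit) exists and is finite, and it is
   <= C_avg of every feasible schedule for which C_avg exists
   (in the extended reals). *)
Definition optimal (ss : list stream) (sigma : schedule) : Prop :=
  feasible sigma /\
  exists c : R,
    is_lim_seq (avg_cost ss sigma) (Finite c) /\
    forall sigma' : schedule, feasible sigma' ->
      forall l : Rbar, is_lim_seq (avg_cost ss sigma') l ->
        Rbar_le (Finite c) l.

(* Main.v *)
Require Import Defs.
From Stdlib Require Import Reals Arith List Lia Lra Classical.
From Coquelicot Require Import Coquelicot.


Definition dopp (d : dir) : dir := match d with DirD => DirU | DirU => DirD end.
Definition isW (a : action) : bool := match a with ActW => true | _ => false end.
Definition dir_of (a : action) : dir := match a with ActU => DirU | _ => DirD end.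

Definition orient (sg : schedule) (o : nat -> dir) : Prop :=
  forall t, (1 <= t)%nat ->
    (sg t = ActW -> o (S t) = o t) /\
    (sg t <> ActW -> sg t = act_of_dir (o t) /\ o (S t) = dopp (o t)).

Lemma dopp_dopp d : dopp (dopp d) = d. Proof. destruct d; reflexivity. Qed.

Lemma orient_const sg o : orient sg o -> forall t n, (1 <= t)%nat ->
  (forall v, (t <= v < t + n)%nat -> sg v = ActW) -> o (t + n)%nat = o t.
Proof.
  intros Ho t n Ht. induction n as [|n IH]; intros Hw.
  - f_equal; lia.
  - replace (t + S n)%nat with (S (t + n)) by lia.
    rewrite (proj1 (Ho (t+n)%nat ltac:(lia))) by (apply Hw; lia).
    apply IH. intros; apply Hw; lia.
Qed.

Lemma orient_feasible sg o : orient sg o -> feasible sg.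
Proof.
  intros Ho t1 t2 H1 H12 Hn1 Hn2 Hw.
  destruct (proj2 (Ho t1 H1) Hn1) as [E1 E1'].
  destruct (proj2 (Ho t2 ltac:(lia)) Hn2) as [E2 _].
  assert (Hc := orient_const sg o Ho (S t1) (t2 - S t1) ltac:(lia)
                 ltac:(intros; apply Hw; lia)).
  replace (S t1 + (t2 - S t1))%nat with t2 in Hc by lia.
  rewrite E1, E2, Hc, E1'. destruct (o t1); discriminate.
Qed.

Lemma act_distinct a b : a <> ActW -> b <> ActW -> a <> b ->
  b = act_of_dir (dopp (dir_of a)).
Proof. destruct a, b; simpl; congruence. Qed.

Fixpoint ofix (sg : schedule) (o1 : dir) (t : nat) : dir :=
  match t with
  | O => o1
  | S t' => match t' with
            | O => o1
            | _ => match sg t' with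
                   | ActW => ofix sg o1 t'
                   | a => dopp (dir_of a)
                   end
            end
  end.

Lemma feasible_orient sg : feasible sg -> exists o, orient sg o.
Proof.
  intros Hf.
  assert (Ho1 : exists o1 : dir, forall s, (1 <= s)%nat -> sg s <> ActW ->
            (forall v, (1 <= v < s)%nat -> sg v = ActW) -> sg s = act_of_dir o1).
  { destruct (classic (forall s, (1 <= s)%nat -> sg s <> ActW ->
            (forall v, (1 <= v < s)%nat -> sg v = ActW) -> sg s = act_of_dir DirD)) as [H|H].
    - exists DirD; exact H.
    - exists DirU. apply not_all_ex_not in H as [s0 H].
      apply imply_to_and in H as [H1 H]. apply imply_to_and in H as [H2 H].
      apply imply_to_and in H as [H3 H4].
      intros s Hs Hn Hv.
      assert (s = s0).
      { destruct (Nat.lt_trichotomy s s0) as [Hl|[Hl|Hl]]; auto.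
        - exfalso; apply Hn; apply H3; lia.
        - exfalso; apply H2; apply Hv; lia. }
      subst. destruct (sg s0); simpl in *; congruence. }
  destruct Ho1 as [o1 Ho1].
  exists (ofix sg o1).
  assert (P : forall t, (1 <= t)%nat ->
     ((forall v, (1 <= v < t)%nat -> sg v = ActW) /\ ofix sg o1 t = o1) \/
     (exists s, (1 <= s < t)%nat /\ sg s <> ActW /\
        (forall v, (s < v < t)%nat -> sg v = ActW) /\ ofix sg o1 t = dopp (dir_of (sg s)))).
  { induction t as [|t IH]; intros Ht; [lia|].
    destruct (Nat.eq_dec t 0) as [->|Ht0].
    - left. split; [intros; lia| reflexivity].
    - specialize (IH ltac:(lia)).
      assert (Hof : ofix sg o1 (S t) = match sg t with ActW => ofix sg o1 t | a => dopp (dir_of a) end).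
      { destruct t; [lia|reflexivity]. }
      destruct (sg t) eqn:E.
      + right. exists t. rewrite E. repeat split; try lia; try congruence.
      + right. exists t. rewrite E. repeat split; try lia; try congruence.
      + rewrite Hof. destruct IH as [[A B]|[s [A [B [C D]]]]].
        * left. split; auto. intros v Hv. destruct (Nat.eq_dec v t); subst; auto. apply A; lia.
        * right. exists s. repeat split; auto; try lia. intros v Hv.
          destruct (Nat.eq_dec v t); subst; auto. apply C; lia. }
  intros t Ht.
  assert (Hof : ofix sg o1 (S t) = match sg t with ActW => ofix sg o1 t | a => dopp (dir_of a) end).
  { destruct t; [lia|reflexivity]. }
  split.
  - intros E. rewrite Hof, E. reflexivity.
  - intros Hn. assert (Ha : sg t = act_of_dir (ofix sg o1 t)).
    { destruct (P t Ht) as [[A B]|[s [A [B [C D]]]]].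
      + rewrite B. apply Ho1; auto.
      + rewrite D. apply act_distinct; auto.
        apply (Hf s t); auto; lia. }
    split; auto. rewrite Hof. rewrite Ha. destruct (ofix sg o1 t); reflexivity.
Qed.

Lemma queue_mono ss s1 s2 d : (forall t, (1 <= t)%nat -> s1 t = act_of_dir d -> s2 t = act_of_dir d) ->
  forall t, (queue ss s2 d t <= queue ss s1 d t)%nat.
Proof.
  intros H t. induction t as [|t IH]; simpl; [lia|].
  destruct (action_eqb (s2 (S t)) (act_of_dir d)) eqn:E2; [lia|].
  destruct (action_eqb (s1 (S t)) (act_of_dir d)) eqn:E1; [|lia].
  exfalso. assert (s1 (S t) = act_of_dir d) by (destruct (s1 (S t)), d; simpl in *; congruence).
  rewrite (H (S t) ltac:(lia) H0) in E2. destruct d; simpl in E2; discriminate.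
Qed.

Lemma total_mono ss s1 s2 : (forall t, (1 <= t)%nat -> s1 t <> ActW -> s2 t = s1 t) ->
  forall T, (total_cost ss s2 T <= total_cost ss s1 T)%nat.
Proof.
  intros H. assert (Hq : forall d t, (queue ss s2 d t <= queue ss s1 d t)%nat).
  { intros d. apply queue_mono. intros t Ht E. rewrite H; auto. rewrite E; destruct d; discriminate. }
  induction T; simpl; [lia|]. unfold cost. pose proof (Hq DirD (S T)).
  pose proof (Hq DirU (S T)). lia.
Qed.

Definition noWW (sg : schedule) (T : nat) : Prop :=
  forall t, (1 <= t)%nat -> (t < T)%nat -> ~ (sg t = ActW /\ sg (S t) = ActW).

Lemma make_good sg o : orient sg o -> forall T, exists sg2 o2, orient sg2 o2 /\
  (forall t, (1 <= t)%nat -> sg t <> ActW -> sg2 t = sg t) /\ noWW sg2 T.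
Proof.
  intros Ho T. induction T as [|T IH].
  - exists sg, o. split; auto. split; auto. intros t H1 H2; lia.
  - destruct IH as [s2 [o2 [Ho2 [Hs Hn]]]].
    destruct (classic ((1 <= T)%nat /\ s2 T = ActW /\ s2 (S T) = ActW)) as [[HT [W1 W2]]|HN].
    + exists (fun t => if Nat.eq_dec t T then act_of_dir (o2 T)
                       else if Nat.eq_dec t (S T) then act_of_dir (dopp (o2 T)) else s2 t).
      exists (fun t => if Nat.eq_dec t (S T) then dopp (o2 T) else o2 t).
      split; [|split].
      * intros t Ht.
        destruct (Nat.eq_dec t T) as [->|n1].
        { destruct (Nat.eq_dec T (S T)); [lia|].
          destruct (Nat.eq_dec (S T) (S T)); [|congruence].
          split; [intros E; destruct (o2 T); discriminate|]. split; auto. }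
        destruct (Nat.eq_dec t (S T)) as [->|n2].
        { destruct (Nat.eq_dec (S (S T)) (S T)); [lia|].
          split; [intros E; destruct (o2 T); discriminate|]. split; auto.
          rewrite dopp_dopp.
          rewrite (proj1 (Ho2 (S T) ltac:(lia)) W2).
          rewrite (proj1 (Ho2 T HT) W1). reflexivity. }
        destruct (Nat.eq_dec (S t) (S T)); [lia|]. apply Ho2; auto.
      * intros t Ht Hw. destruct (Nat.eq_dec t T) as [->|n1].
        { exfalso. rewrite Hs in W1; auto. }
        destruct (Nat.eq_dec t (S T)) as [->|n2].
        { exfalso. rewrite Hs in W2; auto. }
        auto.
      * intros t H1 H2 [A B]. cbv beta in A, B.
        destruct (Nat.eq_dec t T) as [->|n1]; [destruct (o2 T); discriminate|].
        destruct (Nat.eq_dec t (S T)) as [->|n2]; [lia|].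
        destruct (Nat.eq_dec (S t) T) as [E|n3].
        { subst T. destruct (Nat.eq_dec (S t) (S t)); [|congruence]. destruct (o2 (S t)); discriminate. }
        destruct (Nat.eq_dec (S t) (S T)); [lia|].
        apply (Hn t); auto. lia.
    + exists s2, o2. split; auto. split; auto. intros t H1 H2 [A B].
      destruct (Nat.eq_dec t T) as [->|n1].
      * apply HN; auto.
      * apply (Hn t); auto; lia.
Qed.

Lemma lam_divide ss : forall s, In s ss -> Nat.divide (s_lam s) (big_lambda ss).
Proof.
  induction ss as [|a ss IH]; simpl; [tauto|].
  intros s [->|H].
  - apply Nat.divide_lcm_l.
  - eapply Nat.divide_trans; [apply IH; auto|apply Nat.divide_lcm_r].
Qed.

Lemma lam_pos ss : List.Forall stream_wf ss -> big_lambda ss <> 0%nat.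
Proof.
  induction 1 as [|a ss Ha _ IH]; unfold big_lambda in *; simpl; [lia|].
  rewrite Nat.lcm_eq_0. destruct Ha as [Ha _]. intros [C|C]; [lia|contradiction].
Qed.

Lemma mod_divide_mod x l L : Nat.divide l L -> (x mod L) mod l = x mod l.
Proof.
  intros [k ->]. rewrite (Nat.mul_comm k l), Nat.Div0.mod_mul_r.
  rewrite Nat.mul_comm, Nat.Div0.mod_add, Nat.Div0.mod_mod. reflexivity.
Qed.

Lemma arrivals_mod ss d x y : x mod big_lambda ss = y mod big_lambda ss ->
  arrivals ss d x = arrivals ss d y.
Proof.
  intros H. unfold arrivals. f_equal. apply filter_ext_in. intros s Hs.
  unfold arrives. f_equal. f_equal.
  rewrite <- (mod_divide_mod x _ _ (lam_divide ss s Hs)).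
  rewrite <- (mod_divide_mod y _ _ (lam_divide ss s Hs)). rewrite H. reflexivity.
Qed.

Lemma cong_sub n x y j : x mod n = y mod n -> (j <= x)%nat -> (j <= y)%nat ->
  (x - j) mod n = (y - j) mod n.
Proof.
  intros H Hx Hy. destruct n as [|n].
  - rewrite !Nat.mod_0_r in *. subst; reflexivity.
  - rewrite <- (Nat.Div0.mod_add (x - j) j), <- (Nat.Div0.mod_add (y - j) j).
    replace (x - j + j * S n)%nat with (x + j * n)%nat by nia.
    replace (y - j + j * S n)%nat with (y + j * n)%nat by nia.
    rewrite <- Nat.Div0.add_mod_idemp_l, H, Nat.Div0.add_mod_idemp_l. reflexivity.
Qed.

Fixpoint wsum (ss : list stream) (d : dir) (t m : nat) : nat :=
  match m with
  | O => O
  | S m' => (arrivals ss d t + wsum ss d (pred t) m')%nat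
  end.

Lemma wsum_mod ss d m : forall t t', t mod big_lambda ss = t' mod big_lambda ss ->
  (m <= S t)%nat -> (m <= S t')%nat -> wsum ss d t m = wsum ss d t' m.
Proof.
  induction m as [|m IH]; intros t t' H H1 H2; simpl; [reflexivity|].
  rewrite (arrivals_mod ss d t t' H). f_equal.
  destruct m as [|m]; [reflexivity|].
  apply IH; try lia. rewrite <- !Nat.sub_1_r. apply cong_sub; auto; lia.
Qed.

Lemma queue_window ss sg d u : (1 <= u)%nat -> sg u = act_of_dir d ->
  forall n, (forall v, (u < v <= u + n)%nat -> sg v <> act_of_dir d) ->
  queue ss sg d (u + n) = wsum ss d (u + n) n.
Proof.
  intros Hu Hs n. induction n as [|n IH]; intros Hv.
  - rewrite Nat.add_0_r. destruct u as [|u]; [lia|]. simpl. rewrite Hs.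
    destruct d; reflexivity.
  - replace (u + S n)%nat with (S (u + n)) by lia. simpl.
    assert (Hn : sg (S (u + n)) <> act_of_dir d) by (apply Hv; lia).
    destruct (action_eqb (sg (S (u + n))) (act_of_dir d)) eqn:E.
    + exfalso; apply Hn. destruct (sg (S (u+n))), d; simpl in *; congruence.
    + rewrite IH by (intros; apply Hv; lia). lia.
Qed.
Open Scope nat_scope.

Record st := mkst { sr : nat; sz : dir; se : bool; sgap : bool }.

Definition act_succ (Lm : nat) (s : st) : st := mkst (S (sr s) mod Lm) (dopp (sz s)) false (se s).
Definition wait_succ (Lm : nat) (s : st) : st := mkst (S (sr s) mod Lm) (sz s) true (sgap s).
Definition edge (Lm : nat) (s s' : st) : Prop :=
  s' = act_succ Lm s \/ (se s = false /\ s' = wait_succ Lm s).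
Definition b2n (b : bool) : nat := if b then 1%nat else 0%nat.

Definition acost_at (ss : list stream) (t : nat) (z : dir) (e g : bool) : nat :=
  ((if e then arrivals ss z t else 0) + wsum ss (dopp z) t (1 + b2n e + b2n g))%nat.
Definition acost (ss : list stream) (s : st) : nat :=
  acost_at ss (sr s + 4 * big_lambda ss) (sz s) (se s) (sgap s).

Definition state_of (Lm : nat) (sg : schedule) (t : nat) : st :=
  let e := isW (sg t) in
  mkst (t mod Lm) (dir_of (sg (t - b2n e))) e (isW (sg (t - b2n e - 1))).

Lemma next_act sg o u v : orient sg o -> (1 <= u)%nat -> (u < v)%nat -> sg u <> ActW -> sg v <> ActW ->
  (forall w, (u < w < v)%nat -> sg w = ActW) -> sg v = act_of_dir (dopp (dir_of (sg u))).
Proof.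
  intros Ho Hu Huv Hn1 Hn2 Hw. apply act_distinct; auto.
  apply (orient_feasible sg o Ho u v); auto.
Qed.

Lemma act_dir a : a <> ActW -> a = act_of_dir (dir_of a).
Proof. destruct a; simpl; congruence. Qed.
Lemma dir_act d : dir_of (act_of_dir d) = d.
Proof. destruct d; reflexivity. Qed.
Lemma isW_true a : isW a = true <-> a = ActW.
Proof. destruct a; simpl; split; congruence. Qed.
Lemma isW_false a : isW a = false <-> a <> ActW.
Proof. destruct a; simpl; split; congruence. Qed.
Lemma act_ne_W d : act_of_dir d <> ActW.
Proof. destruct d; discriminate. Qed.
Lemma act_ne_opp d : act_of_dir d <> act_of_dir (dopp d).
Proof. destruct d; discriminate. Qed.

Lemma cost_split ss sg t z : cost ss sg t = (queue ss sg z t + queue ss sg (dopp z) t)%nat.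
Proof. unfold cost; destruct z; simpl; lia. Qed.

Lemma cost_at ss sg o T t : orient sg o -> noWW sg T -> (4 <= t <= T)%nat ->
  let s := state_of (big_lambda ss) sg t in
  cost ss sg t = acost_at ss t (sz s) (se s) (sgap s).
Proof.
  intros Ho Hn Ht s. unfold s, state_of, acost_at; simpl.
  destruct (sg t) eqn:Et.
  -
    simpl. replace (t - 0)%nat with t by lia. rewrite Et. simpl.
    rewrite (cost_split ss sg t DirD).
    pose proof (queue_window ss sg DirD t ltac:(lia) Et 0 ltac:(intros; lia)) as Q1.
    rewrite Nat.add_0_r in Q1. rewrite Q1. simpl.
    destruct (sg (t - 1)%nat) eqn:E1.
    + exfalso. pose proof (next_act sg o (t-1) t Ho ltac:(lia) ltac:(lia)) as X.
      rewrite E1, Et in X. specialize (X ltac:(discriminate) ltac:(discriminate) ltac:(intros; lia)).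
      discriminate.
    + pose proof (queue_window ss sg DirU (t-1) ltac:(lia) E1 1) as Q.
      replace (t - 1 + 1)%nat with t in Q by lia. rewrite Q; [simpl; lia|].
      intros v Hv. replace v with t by lia. rewrite Et; discriminate.
    + assert (E2 : sg (t-2)%nat <> ActW).
      { intros E2. apply (Hn (t-2)%nat); try lia. replace (S (t-2)) with (t-1)%nat by lia. auto. }
      pose proof (next_act sg o (t-2) t Ho ltac:(lia) ltac:(lia) E2) as X.
      rewrite Et in X. specialize (X ltac:(discriminate)).
      assert (E2' : sg (t-2)%nat = ActU).
      { destruct (sg (t-2)%nat); simpl in X; try congruence. exfalso.
        assert (Hw : forall w, (t - 2 < w < t)%nat -> sg w = ActW)
          by (intros w Hw; replace w with (t-1)%nat by lia; auto).
        specialize (X Hw); discriminate. }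
      pose proof (queue_window ss sg DirU (t-2) ltac:(lia) E2' 2) as Q.
      replace (t - 2 + 2)%nat with t in Q by lia. rewrite Q; [simpl; replace (pred t) with (t-1)%nat by lia; lia|].
      intros v Hv. assert (v = t-1 \/ v = t)%nat as [->| ->] by lia; [rewrite E1|rewrite Et]; discriminate.
  -
    simpl. replace (t - 0)%nat with t by lia. rewrite Et. simpl.
    rewrite (cost_split ss sg t DirU).
    pose proof (queue_window ss sg DirU t ltac:(lia) Et 0 ltac:(intros; lia)) as Q1.
    rewrite Nat.add_0_r in Q1. rewrite Q1. simpl.
    destruct (sg (t - 1)%nat) eqn:E1.
    + pose proof (queue_window ss sg DirD (t-1) ltac:(lia) E1 1) as Q.
      replace (t - 1 + 1)%nat with t in Q by lia. rewrite Q; [simpl; lia|].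
      intros v Hv. replace v with t by lia. rewrite Et; discriminate.
    + exfalso. pose proof (next_act sg o (t-1) t Ho ltac:(lia) ltac:(lia)) as X.
      rewrite E1, Et in X. specialize (X ltac:(discriminate) ltac:(discriminate) ltac:(intros; lia)).
      discriminate.
    + assert (E2 : sg (t-2)%nat <> ActW).
      { intros E2. apply (Hn (t-2)%nat); try lia. replace (S (t-2)) with (t-1)%nat by lia. auto. }
      pose proof (next_act sg o (t-2) t Ho ltac:(lia) ltac:(lia) E2) as X.
      rewrite Et in X. specialize (X ltac:(discriminate)).
      assert (E2' : sg (t-2)%nat = ActD).
      { destruct (sg (t-2)%nat); simpl in X; try congruence. exfalso.
        assert (Hw : forall w, (t - 2 < w < t)%nat -> sg w = ActW)
          by (intros w Hw; replace w with (t-1)%nat by lia; auto).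
        specialize (X Hw); discriminate. }
      pose proof (queue_window ss sg DirD (t-2) ltac:(lia) E2' 2) as Q.
      replace (t - 2 + 2)%nat with t in Q by lia. rewrite Q; [simpl; replace (pred t) with (t-1)%nat by lia; lia|].
      intros v Hv. assert (v = t-1 \/ v = t)%nat as [->| ->] by lia; [rewrite E1|rewrite Et]; discriminate.
  -
    simpl.
    assert (E1 : sg (t-1)%nat <> ActW).
    { intros E1. apply (Hn (t-1)%nat); try lia. replace (S (t-1)) with t by lia. auto. }
    set (Z := dir_of (sg (t-1)%nat)).
    assert (E1' : sg (t-1)%nat = act_of_dir Z) by (apply act_dir; auto).
    clearbody Z.
    rewrite (cost_split ss sg t Z).
    pose proof (queue_window ss sg Z (t-1) ltac:(lia) E1' 1) as Q1.
    replace (t - 1 + 1)%nat with t in Q1 by lia.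
    rewrite Q1 by (intros v Hv; replace v with t by lia; rewrite Et; apply not_eq_sym, act_ne_W).
    simpl.
    destruct (isW (sg (t - 1 - 1)%nat)) eqn:E2; simpl.
    + apply isW_true in E2. replace (t-1-1)%nat with (t-2)%nat in E2 by lia.
      assert (E3 : sg (t-3)%nat <> ActW).
      { intros E3. apply (Hn (t-3)%nat); try lia. replace (S (t-3)) with (t-2)%nat by lia. auto. }
      pose proof (next_act sg o (t-3) (t-1) Ho ltac:(lia) ltac:(lia) E3 E1) as X.
      assert (Hw : forall w, (t - 3 < w < t - 1)%nat -> sg w = ActW)
          by (intros w Hw; replace w with (t-2)%nat by lia; auto).
      specialize (X Hw).
      assert (E3' : sg (t-3)%nat = act_of_dir (dopp Z)).
      { rewrite (act_dir _ E3). f_equal. rewrite E1' in X. 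
        destruct (dir_of (sg (t-3)%nat)), Z; simpl in *; congruence. }
      pose proof (queue_window ss sg (dopp Z) (t-3) ltac:(lia) E3' 3) as Q.
      replace (t - 3 + 3)%nat with t in Q by lia. rewrite Q.
      * simpl. replace (pred (pred t)) with (pred (t-1)) by lia. lia.
      * intros v Hv. assert (v = t-2 \/ v = t-1 \/ v = t)%nat as [->|[->| ->]] by lia.
        -- rewrite E2. apply not_eq_sym, act_ne_W.
        -- rewrite E1'. apply act_ne_opp.
        -- rewrite Et. apply not_eq_sym, act_ne_W.
    + apply isW_false in E2. replace (t-1-1)%nat with (t-2)%nat in E2 by lia.
      pose proof (next_act sg o (t-2) (t-1) Ho ltac:(lia) ltac:(lia) E2 E1 ltac:(intros; lia)) as X.
     
      assert (E3' : sg (t-2)%nat = act_of_dir (dopp Z)).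
      { rewrite (act_dir _ E2). f_equal. rewrite E1' in X. 
        destruct (dir_of (sg (t-2)%nat)), Z; simpl in *; congruence. }
      pose proof (queue_window ss sg (dopp Z) (t-2) ltac:(lia) E3' 2) as Q.
      replace (t - 2 + 2)%nat with t in Q by lia. rewrite Q.
      * simpl. lia.
      * intros v Hv. assert (v = t-1 \/ v = t)%nat as [->| ->] by lia.
        -- rewrite E1'. apply act_ne_opp.
        -- rewrite Et. apply not_eq_sym, act_ne_W.
Qed.

Lemma acost_at_mod ss t z e g : big_lambda ss <> 0 -> 2 <= t ->
  acost_at ss t z e g = acost_at ss (t mod big_lambda ss + 4 * big_lambda ss) z e g.
Proof.
  intros HL Ht. assert (Hm : t mod big_lambda ss = (t mod big_lambda ss + 4 * big_lambda ss) mod big_lambda ss).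
  { rewrite Nat.Div0.mod_add, Nat.Div0.mod_mod. reflexivity. }
  unfold acost_at. f_equal.
  - destruct e; auto. apply arrivals_mod; auto.
  - apply wsum_mod; auto; destruct e, g; simpl; lia.
Qed.

Lemma cost_state ss sg o T t : big_lambda ss <> 0 -> orient sg o -> noWW sg T -> 4 <= t <= T ->
  cost ss sg t = acost ss (state_of (big_lambda ss) sg t).
Proof.
  intros HL Ho Hn Ht. rewrite (cost_at ss sg o T t Ho Hn Ht).
  unfold acost. rewrite acost_at_mod by lia. reflexivity.
Qed.

Lemma succ_mod Lm x : S x mod Lm = S (x mod Lm) mod Lm.
Proof.
  replace (S x) with (x + 1) by lia. replace (S (x mod Lm)) with (x mod Lm + 1) by lia.
  rewrite Nat.Div0.add_mod_idemp_l. reflexivity.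
Qed.

Lemma state_edge Lm sg o T t : orient sg o -> noWW sg T -> 2 <= t -> S t <= T ->
  edge Lm (state_of Lm sg t) (state_of Lm sg (S t)).
Proof.
  intros Ho Hn Ht HT. unfold edge, state_of, act_succ, wait_succ. simpl.
  destruct (sg (S t)) eqn:E; simpl.
  1,2: left; replace (S t - 0 - 1) with t by lia; replace (S t - 0) with (S t) by lia; rewrite E;
    replace (t - 0) with t by lia; rewrite succ_mod; f_equal;
    destruct (sg t) eqn:Et; simpl;
    [ replace (t - 0) with t by lia; rewrite Et;
      pose proof (next_act sg o t (S t) Ho ltac:(lia) ltac:(lia)) as X;
      rewrite Et, E in X; specialize (X ltac:(discriminate) ltac:(discriminate) ltac:(intros; lia));
      simpl in X; try discriminate; reflexivity
    | replace (t - 0) with t by lia; rewrite Et;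
      pose proof (next_act sg o t (S t) Ho ltac:(lia) ltac:(lia)) as X;
      rewrite Et, E in X; specialize (X ltac:(discriminate) ltac:(discriminate) ltac:(intros; lia));
      simpl in X; try discriminate; reflexivity
    | assert (E1 : sg (t-1) <> ActW) by
        (intros E1; apply (Hn (t-1)); try lia; replace (S (t-1)) with t by lia; auto);
      pose proof (next_act sg o (t-1) (S t) Ho ltac:(lia) ltac:(lia) E1) as X;
      rewrite E in X; specialize (X ltac:(discriminate));
      assert (Hw : forall w, t - 1 < w < S t -> sg w = ActW)
        by (intros w Hw; replace w with t by lia; auto);
      specialize (X Hw);
      destruct (sg (t-1)); simpl in X; try discriminate; try congruence; reflexivity ].
  right.
  assert (Et : sg t <> ActW) by (intros Et; apply (Hn t); auto; lia).
  replace (S t - 1) with t by lia; replace (t - 1 - 0) with (t - 1) by lia.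
  replace (t - 0) with t by lia. rewrite succ_mod. 
  destruct (sg t) eqn:Et'; try congruence; simpl; split; auto.
  all: replace (t - 0 - 1) with (t - 1) by lia; replace (t - 0) with t by lia; rewrite Et'; reflexivity.
Qed.

Definition valid (Lm : nat) (s : st) : Prop := sr s < Lm.
Definition enc (s : st) : nat :=
  sr s * 8 + (match sz s with DirD => 0 | DirU => 4 end) + b2n (se s) * 2 + b2n (sgap s).

Lemma enc_inj s s' : enc s = enc s' -> s = s'.
Proof.
  destruct s as [r z e g], s' as [r' z' e' g']; unfold enc; simpl.
  destruct z, z', e, e', g, g'; simpl; intros H; try lia;
  assert (r = r') by lia; subst; reflexivity.
Qed.

Lemma enc_lt Lm s : valid Lm s -> enc s < 8 * Lm.
Proof.
  destruct s as [r z e g]; unfold valid, enc; simpl. intros H.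
  destruct z, e, g; simpl; lia.
Qed.

Lemma pigeon : forall N (f : nat -> nat), (forall k, k <= N -> f k < N) ->
  exists i j, i < j <= N /\ f i = f j.
Proof.
  induction N as [|N IH]; intros f Hf.
  - specialize (Hf 0 ltac:(lia)); lia.
  - destruct (classic (exists i, i <= N /\ f i = f (S N))) as [[i [Hi E]]|Hno].
    + exists i, (S N). split; [lia|auto].
    + destruct (Nat.eq_dec (f (S N)) N) as [Hv|Hv].
      * destruct (IH f) as [i [j [H1 H2]]].
        { intros k Hk. specialize (Hf k ltac:(lia)).
          destruct (Nat.eq_dec (f k) N); [|lia]. exfalso. apply Hno. exists k. split; auto; lia. }
        exists i, j. split; auto; lia.
      * set (g k := if Nat.eq_dec (f k) N then f (S N) else f k).
        destruct (IH g) as [i [j [H1 H2]]].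
        { intros k Hk. unfold g. specialize (Hf (S N) ltac:(lia)) as Hs.
          specialize (Hf k ltac:(lia)). destruct (Nat.eq_dec (f k) N); lia. }
        exists i, j. split; [lia|]. unfold g in H2.
        destruct (Nat.eq_dec (f i) N), (Nat.eq_dec (f j) N); try lia.
        -- exfalso. apply Hno. exists j. split; [lia|auto].
        -- exfalso. apply Hno. exists i. split; [lia|auto].
Qed.

Definition pathv (Lm : nat) (s : nat -> st) (a n : nat) : Prop :=
  (forall k, k < n -> edge Lm (s (a + k)) (s (a + k + 1))) /\
  (forall k, k <= n -> valid Lm (s (a + k))).

Lemma find_cycle Lm s a : pathv Lm s a (8 * Lm) ->
  exists i j, i < j <= 8 * Lm /\ s (a + i) = s (a + j).
Proof.
  intros [_ Hv].
  destruct (pigeon (8 * Lm) (fun k => enc (s (a + k)))) as [i [j [H1 H2]]].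
  - intros k Hk. apply enc_lt. auto.
  - exists i, j. split; auto. apply enc_inj; auto.
Qed.

Fixpoint psum (ss : list stream) (s : nat -> st) (a n : nat) : nat :=
  match n with
  | O => O
  | S n' => psum ss s a n' + acost ss (s (a + S n'))
  end.

Lemma psum_split ss s a n m : psum ss s a (n + m) = psum ss s a n + psum ss s (a + n) m.
Proof.
  induction m as [|m IH]; simpl; [rewrite Nat.add_0_r; lia|].
  replace (n + S m) with (S (n + m)) by lia. simpl. rewrite IH.
  replace (a + S (n + m)) with (a + n + S m) by lia. lia.
Qed.

Lemma psum_ext ss s s' a a' n : (forall k, 1 <= k <= n -> s (a + k) = s' (a' + k)) ->
  psum ss s a n = psum ss s' a' n.
Proof.
  induction n as [|n IH]; intros H; simpl; [reflexivity|].
  rewrite IH by (intros; apply H; lia). rewrite H by lia. reflexivity.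
Qed.

Definition CYC (ss : list stream) (Lm L m : nat) : Prop :=
  exists p, pathv Lm p 0 L /\ p L = p 0 /\ psum ss p 0 L = m.

Lemma path_cycle ss Lm s a n i j : pathv Lm s a n -> i < j <= n -> s (a + i) = s (a + j) ->
  CYC ss Lm (j - i) (psum ss s (a + i) (j - i)).
Proof.
  intros [He Hv] Hij E. exists (fun k => s (a + i + k)). split; [split|split].
  - intros k Hk. replace (0 + k) with k by lia. replace (a + i + (k + 1)) with (a + (i + k) + 1) by lia.
    replace (a + i + k) with (a + (i + k)) by lia. apply He; lia.
  - intros k Hk. replace (a + i + (0 + k)) with (a + (i + k)) by lia. apply Hv; lia.
  - simpl. replace (a + i + (j - i)) with (a + j) by lia. rewrite Nat.add_0_r. auto.
  - apply psum_ext. intros; f_equal; lia.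
Qed.

Lemma lower_bound ss Lm Ls ms :
  (forall L m, 1 <= L <= 8 * Lm -> CYC ss Lm L m -> ms * L <= m * Ls) ->
  forall n a s, pathv Lm s a n -> ms * n <= psum ss s a n * Ls + ms * (8 * Lm).
Proof.
  intros Hb n. induction n as [n IH] using lt_wf_ind. intros a s Hp.
  destruct (le_lt_dec n (8 * Lm)) as [Hn|Hn].
  - pose proof (Nat.mul_le_mono_l _ _ ms Hn). lia.
  - set (b := n - 8 * Lm).
    assert (Hp' : pathv Lm s (a + b) (8 * Lm)).
    { destruct Hp as [He Hv]. split.
      - intros k Hk. replace (a + b + k) with (a + (b + k)) by lia. apply He; lia.
      - intros k Hk. replace (a + b + k) with (a + (b + k)) by lia. apply Hv; lia. }
    destruct (find_cycle Lm s (a + b) Hp') as [i [j [Hij E]]].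
    set (I := b + i). set (J := b + j). set (l := j - i).
    assert (EI : s (a + I) = s (a + J)) by (unfold I, J; rewrite !Nat.add_assoc; auto).
    assert (Hc := path_cycle ss Lm s a n I J Hp ltac:(unfold I, J; lia) EI).
    replace (J - I) with l in Hc by (unfold l, I, J; lia).
    specialize (Hb l _ ltac:(unfold l; lia) Hc).
    set (s' := fun k => if le_lt_dec k (a + I) then s k else s (k + l)).
    assert (Hp2 : pathv Lm s' a (n - l)).
    { destruct Hp as [He Hv]. split.
      - intros k Hk. unfold s'.
        destruct (le_lt_dec (a + k) (a + I)), (le_lt_dec (a + k + 1) (a + I)); try lia.
        + apply He; lia.
        + assert (k = I) by lia. subst k. rewrite EI.
          replace (a + I + 1 + l) with (a + J + 1) by (unfold l, I, J; lia). apply He. unfold l, I, J in *; lia.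
        + replace (a + k + l) with (a + (k + l)) by lia.
          replace (a + k + 1 + l) with (a + (k + l) + 1) by lia. apply He; unfold l in *; lia.
      - intros k Hk. unfold s'. destruct (le_lt_dec (a + k) (a + I)).
        + apply Hv; lia.
        + replace (a + k + l) with (a + (k + l)) by lia. apply Hv. unfold l, I, J in *; lia. }
    assert (IH2 := IH (n - l) ltac:(unfold l; lia) a s' Hp2).
    assert (S1 : psum ss s a n = psum ss s a I + psum ss s (a + I) l + psum ss s (a + J) (n - J)).
    { replace n with (I + l + (n - J)) at 1 by (unfold l, I, J in *; lia).
      rewrite !psum_split. replace (a + (I + l)) with (a + J) by (unfold l, I, J in *; lia). lia. }
    assert (S2 : psum ss s' a (n - l) = psum ss s a I + psum ss s (a + J) (n - J)).
    { replace (n - l) with (I + (n - J)) by (unfold l, I, J in *; lia).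
      rewrite psum_split. f_equal.
      - apply psum_ext. intros k Hk. unfold s'. destruct (le_lt_dec (a + k) (a + I)); [reflexivity|lia].
      - apply psum_ext. intros k Hk. unfold s'. destruct (le_lt_dec (a + I + k) (a + I)); [lia|].
        f_equal. unfold l, I, J in *; lia. }
    rewrite S1. rewrite S2 in IH2.
    assert (ms * n = ms * (n - l) + ms * l) by (rewrite <- Nat.mul_add_distr_l; f_equal; unfold l in *; lia).
    nia.
Qed.

Lemma nat_min (Q : nat -> Prop) : (exists m, Q m) -> exists m, Q m /\ forall m', Q m' -> m <= m'.
Proof.
  intros [m0 H0]. apply NNPP. intros Hno.
  assert (forall n, ~ Q n).
  { intros n. induction n as [n IH] using lt_wf_ind. intros Hn. apply Hno.
    exists n. split; auto. intros m' Hm'. destruct (le_lt_dec n m'); auto.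
    exfalso. apply (IH m'); auto. }
  eapply H; eauto.
Qed.

Lemma best_exists (P : nat -> nat -> Prop) N : (exists L m, 1 <= L <= N /\ P L m) ->
  exists Ls ms, 1 <= Ls <= N /\ P Ls ms /\ forall L m, 1 <= L <= N -> P L m -> ms * L <= m * Ls.
Proof.
  induction N as [|N IH]; intros Hex.
  - destruct Hex as [L [m [H _]]]; lia.
  - destruct (classic (exists m, P (S N) m)) as [HS|HS].
    + destruct (nat_min (P (S N)) HS) as [m0 [Hm0 Hmin]].
      destruct (classic (exists L m, 1 <= L <= N /\ P L m)) as [HN|HN].
      * destruct (IH HN) as [L1 [m1 [HL1 [HP1 Hb1]]]].
        destruct (le_lt_dec (m0 * L1) (m1 * S N)) as [Hc|Hc].
        -- exists (S N), m0. split; [lia|split; auto]. intros L m HL HP.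
           destruct (Nat.eq_dec L (S N)) as [->|HLn].
           ++ specialize (Hmin m HP). nia.
           ++ specialize (Hb1 L m ltac:(lia) HP).
              assert (m0 * L * L1 <= m * S N * L1) by nia.
              apply (Nat.mul_le_mono_pos_r _ _ L1); lia.
        -- exists L1, m1. split; [lia|split; auto]. intros L m HL HP.
           destruct (Nat.eq_dec L (S N)) as [->|HLn].
           ++ specialize (Hmin m HP). nia.
           ++ apply Hb1; auto; lia.
      * exists (S N), m0. split; [lia|split; auto]. intros L m HL HP.
        destruct (Nat.eq_dec L (S N)) as [->|HLn].
        -- specialize (Hmin m HP). nia.
        -- exfalso. apply HN. exists L, m. split; auto; lia.
    + destruct IH as [L1 [m1 [HL1 [HP1 Hb1]]]].
      { destruct Hex as [L [m [HL HP]]]. exists L, m. split; auto.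
        destruct (Nat.eq_dec L (S N)) as [->|]; [exfalso; apply HS; eauto|lia]. }
      exists L1, m1. split; [lia|split; auto]. intros L m HL HP.
      destruct (Nat.eq_dec L (S N)) as [->|HLn]; [exfalso; apply HS; eauto|].
      apply Hb1; auto; lia.
Qed.

Fixpoint alt (Lm : nat) (k : nat) : st :=
  match k with O => mkst 0 DirD false false | S k' => act_succ Lm (alt Lm k') end.

Lemma some_cycle ss Lm : Lm <> 0 -> exists L m, 1 <= L <= 8 * Lm /\ CYC ss Lm L m.
Proof.
  intros HL.
  assert (Hp : pathv Lm (alt Lm) 0 (8 * Lm)).
  { split.
    - intros k _. left. replace (0 + k + 1) with (S k) by lia. reflexivity.
    - intros k _. simpl. destruct k; unfold valid; simpl; [lia|]. apply Nat.mod_upper_bound; auto. }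
  destruct (find_cycle Lm (alt Lm) 0 Hp) as [i [j [Hij E]]].
  exists (j - i), (psum ss (alt Lm) (0 + i) (j - i)). split; [lia|].
  apply (path_cycle ss Lm (alt Lm) 0 (8 * Lm) i j Hp Hij E).
Qed.

Lemma back_edge Lm s s' : edge Lm s s' ->
  sr s' = S (sr s) mod Lm /\
  (se s' = true -> se s = false /\ sz s' = sz s /\ sgap s' = sgap s) /\
  (se s' = false -> sz s' = dopp (sz s) /\ sgap s' = se s).
Proof.
  intros [->|[H ->]]; unfold act_succ, wait_succ; simpl; repeat split; auto; discriminate.
Qed.

Lemma st_eq a b : sr a = sr b -> sz a = sz b -> se a = se b -> sgap a = sgap b -> a = b.
Proof. destruct a, b; simpl; intros; subst; reflexivity. Qed.

Definition actof (s : st) : action := if se s then ActW else act_of_dir (sz s).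

Lemma isW_actof s : isW (actof s) = se s.
Proof. unfold actof; destruct (se s), (sz s); reflexivity. Qed.
Lemma dir_actof s : se s = false -> dir_of (actof s) = sz s.
Proof. unfold actof; intros ->; apply dir_act. Qed.

Section Cyc.
Variable Lm L : nat.
Variable p : nat -> st.
Hypothesis HLm : Lm <> 0.
Hypothesis HL : 1 <= L.
Hypothesis Hp : pathv Lm p 0 L.
Hypothesis Hpc : p L = p 0.

Definition q (n : nat) : st := p (n mod L).

Lemma q_edge n : edge Lm (q n) (q (S n)) /\ valid Lm (q n).
Proof.
  destruct Hp as [He Hv]. unfold q.
  assert (Hn : n mod L < L) by (apply Nat.mod_upper_bound; lia).
  split; [|specialize (Hv (n mod L)); simpl in Hv; apply Hv; lia].
  rewrite succ_mod. destruct (Nat.eq_dec (S (n mod L)) L) as [E|E].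
  - rewrite E, Nat.Div0.mod_same, <- Hpc.
    specialize (He (n mod L) Hn). simpl in He. replace (n mod L + 1) with L in He by lia. exact He.
  - rewrite (Nat.mod_small (S (n mod L)) L) by lia. specialize (He (n mod L) Hn). simpl in He.
    replace (n mod L + 1) with (S (n mod L)) in He by lia. exact He.
Qed.

Lemma q_per n : q (n + L) = q n.
Proof. unfold q. replace (n + L) with (n + 1 * L) by lia. rewrite Nat.Div0.mod_add. reflexivity. Qed.

Lemma q_res n : sr (q n) = (sr (q 0) + n) mod Lm.
Proof.
  induction n as [|n IH].
  - rewrite Nat.add_0_r, Nat.mod_small; auto. apply (proj2 (q_edge 0)).
  - destruct (back_edge _ _ _ (proj1 (q_edge n))) as [E _]. rewrite E, IH.
    rewrite <- succ_mod. f_equal. lia.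
Qed.

Definition off : nat := Lm - sr (p 0).
Definition sgc (t : nat) : action := actof (q (t + off)).
Definition oc (t : nat) : dir := dopp (sz (q (t + off - 1))).

Lemma off_pos : 1 <= off.
Proof.
  unfold off. destruct Hp as [_ Hv]. specialize (Hv 0 ltac:(lia)). unfold valid in Hv. simpl in Hv. lia.
Qed.

Lemma sgc_orient : orient sgc oc.
Proof.
  intros t Ht. pose proof off_pos as Ho.
  assert (Ed := proj1 (q_edge (t + off - 1))).
  replace (S (t + off - 1)) with (t + off) in Ed by lia.
  destruct (back_edge _ _ _ Ed) as [_ [Bt Bf]].
  unfold sgc, oc. replace (S t + off - 1) with (t + off) by lia.
  unfold actof. split.
  - destruct (se (q (t + off))) eqn:E; [|destruct (sz (q (t + off))); discriminate].
    intros _. destruct (Bt eq_refl) as [_ [-> _]]. reflexivity.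
  - destruct (se (q (t + off))) eqn:E; [congruence|]. intros _.
    destruct (Bf eq_refl) as [-> _]. rewrite dopp_dopp. split; reflexivity.
Qed.

Lemma sgc_noWW T : noWW sgc T.
Proof.
  intros t _ _ [A B]. unfold sgc, actof in A, B.
  assert (Ed := proj1 (q_edge (t + off))). replace (S (t + off)) with (S t + off) in Ed by lia.
  destruct (back_edge _ _ _ Ed) as [_ [Bt _]].
  destruct (se (q (t + off))) eqn:E1; [|destruct (sz (q (t + off))); discriminate].
  destruct (se (q (S t + off))) eqn:E2; [|destruct (sz (q (S t + off))); discriminate].
  destruct (Bt eq_refl) as [C _]. congruence.
Qed.

Lemma sgc_per t : sgc (t + L) = sgc t.
Proof. unfold sgc. replace (t + L + off) with (t + off + L) by lia. rewrite q_per. reflexivity. Qed.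

Lemma sgc_state t : 2 <= t -> state_of Lm sgc t = q (t + off).
Proof.
  intros Ht. pose proof off_pos as Ho.
  set (n := t + off).
  assert (E1 := proj1 (q_edge (n - 1))). replace (S (n - 1)) with n in E1 by lia.
  assert (E2 := proj1 (q_edge (n - 2))). replace (S (n - 2)) with (n - 1) in E2 by lia.
  destruct (back_edge _ _ _ E1) as [R1 [B1t B1f]].
  destruct (back_edge _ _ _ E2) as [_ [B2t B2f]].
  unfold state_of, sgc. fold n. rewrite isW_actof.
  apply st_eq; simpl.
  - rewrite q_res. fold n. unfold n, off.
    destruct Hp as [_ Hv]. specialize (Hv 0 ltac:(lia)). unfold valid in Hv. simpl in Hv.
    unfold q at 1. rewrite Nat.Div0.mod_0_l.
    replace (sr (p 0) + (t + (Lm - sr (p 0)))) with (t + 1 * Lm) by lia.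
    rewrite Nat.Div0.mod_add. reflexivity.
  - destruct (se (q n)) eqn:E; simpl.
    + replace (t - 1 + off) with (n - 1) by (unfold n; lia).
      destruct (B1t eq_refl) as [F [G _]]. rewrite dir_actof by auto. auto.
    + replace (t - 0 + off) with n by (unfold n; lia). rewrite dir_actof; auto.
  - reflexivity.
  - destruct (se (q n)) eqn:E; simpl.
    + replace (t - 1 - 1 + off) with (n - 2) by (unfold n; lia). rewrite isW_actof.
      destruct (B1t eq_refl) as [F [_ G]]. rewrite G.
      destruct (B2f F) as [_ H]. auto.
    + replace (t - 0 - 1 + off) with (n - 1) by (unfold n; lia). rewrite isW_actof.
      destruct (B1f eq_refl) as [_ G]. auto.
Qed.

End Cyc.

Lemma total_mono_T ss sg a b : total_cost ss sg a <= total_cost ss sg (a + b).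
Proof. induction b; [rewrite Nat.add_0_r; lia|]. replace (a + S b) with (S (a + b)) by lia. simpl. lia. Qed.

Lemma psum_per ss s L : (forall n, s (n + L) = s n) -> forall a, psum ss s a L = psum ss s 0 L.
Proof.
  intros Hs a. induction a as [|a IH]; [reflexivity|].
  pose proof (psum_split ss s a 1 L) as A. pose proof (psum_split ss s a L 1) as B.
  replace (1 + L) with (L + 1) in A by lia. rewrite A in B. simpl in B.
  replace (a + L + 1) with ((a + 1) + L) in B by lia. rewrite Hs in B.
  replace (a + 1) with (S a) in B by lia. lia.
Qed.

Lemma psum_mult ss s L : (forall n, s (n + L) = s n) -> forall k a, psum ss s a (k * L) = k * psum ss s 0 L.
Proof.
  intros Hs k. induction k as [|k IH]; intros a; [reflexivity|].
  replace (S k * L) with (L + k * L) by lia. rewrite psum_split, IH, psum_per by auto. lia.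
Qed.

Section Cyc2.
Variable ss : list stream.
Variable L : nat.
Variable p : nat -> st.
Let Lm := big_lambda ss.
Hypothesis HLm : Lm <> 0.
Hypothesis HL : 1 <= L.
Hypothesis Hp : pathv Lm p 0 L.
Hypothesis Hpc : p L = p 0.
Let sg := sgc Lm L p.
Let u := total_cost ss sg.
Let ms := psum ss p 0 L.

Lemma cost_q t : 4 <= t -> cost ss sg t = acost ss (q L p (t + off Lm p)).
Proof.
  intros Ht. unfold sg. rewrite (cost_state ss _ (oc Lm L p) t t); auto.
  - rewrite sgc_state; auto. lia.
  - apply sgc_orient; auto.
  - apply sgc_noWW.
  - lia.
  all: auto.
Qed.

Lemma total_q k : u (4 + k) = u 4 + psum ss (q L p) (4 + off Lm p) k.
Proof.
  induction k as [|k IH]; [simpl; rewrite Nat.add_0_r; lia|].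
  replace (4 + S k) with (S (4 + k)) by lia.
  change (u (S (4 + k))) with (u (4 + k) + cost ss sg (S (4 + k))). rewrite IH.
  change (psum ss (q L p) (4 + off Lm p) (S k)) with
    (psum ss (q L p) (4 + off Lm p) k + acost ss (q L p (4 + off Lm p + S k))).
  rewrite cost_q by lia. replace (S (4 + k) + off Lm p) with (4 + off Lm p + S k) by lia. lia.
Qed.

Lemma q_sum : psum ss (q L p) 0 L = ms.
Proof.
  unfold ms. apply psum_ext. intros k Hk. simpl. unfold q.
  destruct (Nat.eq_dec k L) as [->|Hn].
  - rewrite Nat.Div0.mod_same, Hpc. reflexivity.
  - rewrite Nat.mod_small by lia. reflexivity.
Qed.

Lemma u_decomp k j : u (4 + (k * L + j)) = u (4 + j) + k * ms.
Proof.
  rewrite !total_q. replace (k * L + j) with (j + k * L) by lia. rewrite psum_split.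
  rewrite psum_mult by (intros; apply (q_per Lm); auto). rewrite q_sum. lia.
Qed.

Lemma u_bounds T : let M := u (4 + L) * L + ms * (4 + L) in
  u T * L <= ms * T + M /\ ms * T <= u T * L + M.
Proof.
  intros M. destruct (le_lt_dec 4 T) as [HT|HT].
  - set (k := (T - 4) / L). set (j := (T - 4) mod L).
    assert (Hj : j < L) by (apply Nat.mod_upper_bound; lia).
    assert (ET : T = 4 + (k * L + j)).
    { unfold k, j. pose proof (Nat.div_mod_eq (T - 4) L). lia. }
    assert (Hu := u_decomp k j). rewrite <- ET in Hu.
    assert (Hm : u (4 + j) <= u (4 + L)).
    { replace (4 + L) with ((4 + j) + (L - j)) by lia. apply total_mono_T. }
    rewrite Hu. unfold M. rewrite ET. split; nia.
  - assert (u T <= u (4 + L)) by (replace (4 + L) with (T + (4 + L - T)) by lia; apply total_mono_T).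
    unfold M. split; nia.
Qed.

End Cyc2.
Close Scope nat_scope.

Lemma inv_lim : is_lim_seq (fun n => / INR n) 0.
Proof.
  pose proof (is_lim_seq_inv INR p_infty is_lim_seq_INR ltac:(discriminate)) as H.
  simpl in H. exact H.
Qed.

Lemma lim_side (c K : R) (sgn : R) : is_lim_seq (fun n => c + sgn * (K * / INR n)) c.
Proof.
  pose proof (is_lim_seq_mult' (fun _ => K) _ K 0 (is_lim_seq_const K) inv_lim) as H1.
  pose proof (is_lim_seq_mult' (fun _ => sgn) _ sgn _ (is_lim_seq_const sgn) H1) as H2.
  pose proof (is_lim_seq_plus' (fun _ => c) _ c _ (is_lim_seq_const c) H2) as H3.
  replace (c + sgn * (K * 0)) with c in H3 by ring. exact H3.
Qed.

Lemma ineq_aux (a b L T M : nat) (s : R) : (1 <= L)%nat -> (1 <= T)%nat ->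
  (s = 1 \/ s = -1) ->
  (s * INR (a * T) <= s * INR (b * L) + INR M) ->
  s * (INR a / INR L) <= s * (INR b / INR T) + INR M / INR L * / INR T.
Proof.
  intros HL HT Hs H. rewrite !mult_INR in H.
  assert (0 < INR L) by (apply lt_0_INR; lia).
  assert (0 < INR T) by (apply lt_0_INR; lia).
  replace (s * (INR a / INR L)) with ((s * (INR a * INR T)) * / (INR L * INR T)) by (field; lra).
  replace (s * (INR b / INR T) + INR M / INR L * / INR T)
    with ((s * (INR b * INR L) + INR M) * / (INR L * INR T)) by (field; lra).
  apply Rmult_le_compat_r; [left; apply Rinv_0_lt_compat; nra|lra].
Qed.

Lemma lim_lower (u : nat -> nat) L ms M l : (1 <= L)%nat ->
  (forall T, (ms * T <= u T * L + M)%nat) ->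
  is_lim_seq (fun T => INR (u T) / INR T) l -> Rbar_le (INR ms / INR L) l.
Proof.
  intros HL Hb Hl.
  apply (is_lim_seq_le_loc (fun n => INR ms / INR L + (-1) * (INR M / INR L * / INR n)) (fun T => INR (u T) / INR T) (INR ms / INR L) l).
  - exists 1%nat. intros n Hn.
    assert (H := ineq_aux ms (u n) L n M 1 HL Hn (or_introl eq_refl)).
    rewrite !Rmult_1_l in H.
    specialize (H ltac:(rewrite <- plus_INR; apply le_INR; apply Hb)). lra.
  - apply lim_side.
  - exact Hl.
Qed.

Lemma lim_exact (u : nat -> nat) L ms M : (1 <= L)%nat ->
  (forall T, (u T * L <= ms * T + M)%nat /\ (ms * T <= u T * L + M)%nat) ->
  is_lim_seq (fun T => INR (u T) / INR T) (INR ms / INR L).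
Proof.
  intros HL Hb.
  apply (is_lim_seq_le_le_loc (fun n => INR ms / INR L + (-1) * (INR M / INR L * / INR n)) _
           (fun n => INR ms / INR L + 1 * (INR M / INR L * / INR n))).
  - exists 1%nat. intros n Hn. split.
    + assert (H := ineq_aux ms (u n) L n M 1 HL Hn (or_introl eq_refl)).
      rewrite !Rmult_1_l in H.
      specialize (H ltac:(rewrite <- plus_INR; apply le_INR; apply Hb)). lra.
    + assert (H := ineq_aux ms (u n) L n M (-1) HL Hn (or_intror eq_refl)).
      assert (Hx : INR (u n * L) <= INR (ms * n) + INR M)
        by (rewrite <- plus_INR; apply le_INR; apply Hb).
      specialize (H ltac:(lra)). lra.
  - apply lim_side.
  - apply lim_side.
Qed.

Lemma psum_total ss sg o T : big_lambda ss <> 0%nat -> orient sg o -> noWW sg T ->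
  forall n, (4 + n <= T)%nat ->
  (psum ss (state_of (big_lambda ss) sg) 4 n <= total_cost ss sg (4 + n))%nat.
Proof.
  intros HL Ho Hn n. induction n as [|n IH]; intros Hle; [simpl; lia|].
  change (psum ss (state_of (big_lambda ss) sg) 4 (S n)) with
    (psum ss (state_of (big_lambda ss) sg) 4 n + acost ss (state_of (big_lambda ss) sg (4 + S n)))%nat.
  replace (4 + S n)%nat with (S (4 + n)) by lia.
  change (total_cost ss sg (S (4+n))) with (total_cost ss sg (4+n) + cost ss sg (S (4+n)))%nat.
  rewrite <- (cost_state ss sg o T (S (4 + n))) by (auto; lia).
  specialize (IH ltac:(lia)). lia.
Qed.

Lemma sigma_lower ss Ls ms sg' o : big_lambda ss <> 0%nat -> orient sg' o ->
  (forall L m, (1 <= L <= 8 * big_lambda ss)%nat -> CYC ss (big_lambda ss) L m -> (ms * L <= m * Ls)%nat) ->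
  forall T, (ms * T <= total_cost ss sg' T * Ls + ms * (8 * big_lambda ss + 4))%nat.
Proof.
  intros HL Ho Hb T.
  destruct (le_lt_dec T 4) as [HT|HT]; [nia|].
  destruct (make_good sg' o Ho T) as [s2 [o2 [Ho2 [Hs Hn]]]].
  set (s := state_of (big_lambda ss) s2).
  assert (Hp : pathv (big_lambda ss) s 4 (T - 4)).
  { split.
    - intros k Hk. replace (4 + k + 1)%nat with (S (4 + k)) by lia.
      apply (state_edge _ s2 o2 T); auto; lia.
    - intros k _. unfold valid, s, state_of. simpl. apply Nat.mod_upper_bound; auto. }
  pose proof (lower_bound ss (big_lambda ss) Ls ms Hb (T - 4) 4 s Hp) as LB.
  pose proof (psum_total ss s2 o2 T HL Ho2 Hn (T - 4) ltac:(lia)) as PT.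
  replace (4 + (T - 4))%nat with T in PT by lia.
  pose proof (total_mono ss sg' s2 Hs T) as TM.
  fold s in PT.
  assert (ms * T = ms * (T - 4) + ms * 4)%nat by (rewrite <- Nat.mul_add_distr_l; f_equal; lia).
  nia.
Qed.

Theorem lemma6 (ss : list stream) (Hwf : List.Forall stream_wf ss) :
  exists (sigma : schedule) (P : nat),
    (1 <= P)%nat /\ (P <= 8 * big_lambda ss)%nat /\
    periodic sigma P /\ optimal ss sigma.
Proof.
  pose proof (lam_pos ss Hwf) as HL.
  destruct (best_exists (CYC ss (big_lambda ss)) (8 * big_lambda ss) (some_cycle ss _ HL))
    as [Ls [ms [HLs [[p [Hp [Hpc Hms]]] Hb]]]].
  exists (sgc (big_lambda ss) Ls p), Ls.
  split; [lia|]. split; [lia|]. split.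
  - intros t _. symmetry. apply sgc_per; auto; lia.
  - unfold optimal. split.
    + eapply orient_feasible. apply sgc_orient; auto; lia.
    + exists (INR ms / INR Ls). split.
      * unfold avg_cost.
        apply (lim_exact _ Ls ms (total_cost ss (sgc (big_lambda ss) Ls p) (4 + Ls) * Ls + ms * (4 + Ls)) ltac:(lia)).
        intros T. subst ms. apply (u_bounds ss Ls p); auto; lia.
      * intros sg' Hf l Hl.
        destruct (feasible_orient sg' Hf) as [o Ho].
        apply (lim_lower (total_cost ss sg') Ls ms (ms * (8 * big_lambda ss + 4)) l ltac:(lia)); [|exact Hl].
        intros T. apply (sigma_lower ss Ls ms sg' o HL Ho Hb T).
Qed.
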